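(* Let $P$ be a poset and $\Delta^\varphi=\{p_0<\dots<p_n\}$ a nondegenerate simplex of $N(P)$. The inclusion $\|\Delta^\varphi\|_P\hookrightarrow\varphi_P^{-1}(\{p_0,\dots,p_n\})$ is a filtered homotopy equivalence.
   Context: $\varphi_P:\|N(P)\|\to P$ sends a point $(\{q_0<\dots<q_m\},t)$, $t$ in the interior of $\Delta^m$, to $q_m$. $\|\Delta^\varphi\|_P$ is the realization of the simplex $\{p_0<\dots<p_n\}$ as a subspace of $\|N(P)\|$, and both it and $\varphi_P^{-1}(\{p_0,\dots,p_n\})\subseteq\|N(P)\|$ are filtered over $P$ by the restriction of $\varphi_P$. A filtered homotopy equivalence is a map $f$ commuting with the maps to $P$ admitting a filtered map $g$ in the other direction such that $f\circ g$ and $g\circ f$ are homotopic to the identities through homotopies $H:A\times[0,1]\to B$ commuting with the maps to $P$ (with $A\times[0,1]$ filtered via the projection to $A$). *)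

(* Defs.v *)
From HB Require Import structures.
From mathcomp Require Import all_boot all_order all_algebra.
From mathcomp Require Import all_classical all_reals topology normedtype.
Set Implicit Arguments. Unset Strict Implicit. Unset Printing Implicit Defensive.
Import Order.TTheory GRing.Theory Num.Theory numFieldNormedType.Exports.
Local Open Scope classical_set_scope.
Local Open Scope ring_scope.

(* The geometric realization ||N(P)|| of the nerve of a poset P is modelled
   inside the type of functions P -> R (barycentric coordinates). *)
Definition realiz (d : Order.disp_t) (P : porderType d) (R : realType) : Type :=
  P -> R.

Definition is_chain (d : Order.disp_t) (P : porderType d) (s : seq P) : Prop :=
  forall p q, p \in s -> q \in s -> (p >=< q)%O.

Definition in_simplex (d : Order.disp_t) (P : porderType d) (R : realType)
  (s : seq P) (t : realiz P R) : Prop :=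
  [/\ forall p, 0 <= t p,
      forall p, p \notin s -> t p = 0
    & \sum_(p <- undup s) t p = 1].

Definition realization (d : Order.disp_t) (P : porderType d) (R : realType)
  : set (realiz P R) :=
  [set t | exists s, is_chain s /\ in_simplex s t].

(* weak (CW) topology: U is open iff its trace on every closed simplex is open
   for the Euclidean topology of that simplex *)
Definition wopen (d : Order.disp_t) (P : porderType d) (R : realType)
  (U : set (realiz P R)) : Prop :=
  forall s, is_chain s -> forall t, in_simplex s t -> U t ->
    exists2 e : R, 0 < e &
      forall t', in_simplex s t' -> (forall p, p \in s -> `|t' p - t p| < e) ->
        U t'.

Lemma wopenT (d : Order.disp_t) (P : porderType d) (R : realType) :
  wopen [set: realiz P R].
Proof. by move=> s _ t _ _; exists 1 => //. Qed.

Lemma wopenI (d : Order.disp_t) (P : porderType d) (R : realType) :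
  setI_closed (@wopen d P R).
Proof.
move=> U V oU oV s cs t st [Ut Vt].
have [e1 e10 H1] := oU s cs t st Ut.
have [e2 e20 H2] := oV s cs t st Vt.
exists (Num.min e1 e2); first by rewrite lt_min e10 e20.
move=> t' st' H; split.
  by apply: H1 => // p ps; have := H p ps; rewrite lt_min => /andP[].
by apply: H2 => // p ps; have := H p ps; rewrite lt_min => /andP[].
Qed.

Lemma wopen_bigU (d : Order.disp_t) (P : porderType d) (R : realType)
  (I : Type) (f : I -> set (realiz P R)) :
  (forall i, wopen (f i)) -> wopen (\bigcup_i f i).
Proof.
move=> hf s cs t st [i _ fit].
have [e e0 H] := hf i s cs t st fit.
by exists e => // t' st' H'; exists i => //; apply: H.
Qed.

HB.instance Definition _ (d : Order.disp_t) (P : porderType d) (R : realType) :=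
  Choice.on (realiz P R).
HB.instance Definition _ (d : Order.disp_t) (P : porderType d) (R : realType) :=
  isOpenTopological.Build (realiz P R) (@wopenT d P R) (@wopenI d P R)
    (@wopen_bigU d P R).

(* phi_P t = p : p is the largest vertex of the support of t, i.e. the last
   vertex q_m of the open simplex containing t *)
Definition phiP (d : Order.disp_t) (P : porderType d) (R : realType)
  (t : realiz P R) (p : P) : Prop :=
  t p != 0 /\ forall q, t q != 0 -> (q <= p)%O.

Definition simplex_real (d : Order.disp_t) (P : porderType d) (R : realType)
  (s : seq P) : set (realiz P R) := [set t | in_simplex s t].

Definition phi_preim (d : Order.disp_t) (P : porderType d) (R : realType)
  (s : seq P) : set (realiz P R) :=
  [set t | realization t /\ exists2 p, p \in s & phiP t p].

Definition filtered_map (d : Order.disp_t) (P : porderType d) (R : realType)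
  (A B : set (realiz P R)) (f : realiz P R -> realiz P R) : Prop :=
  [/\ {within A, continuous f},
      forall a, A a -> B (f a)
    & forall a p, A a -> phiP a p -> phiP (f a) p].

Definition filtered_homotopic (d : Order.disp_t) (P : porderType d)
  (R : realType) (A B : set (realiz P R)) (f g : realiz P R -> realiz P R)
  : Prop :=
  exists H : realiz P R * R -> realiz P R,
    [/\ {within A `*` (`[0, 1] : set R), continuous H},
        forall a s, A a -> s \in `[0, 1] -> B (H (a, s)),
        forall a s p, A a -> s \in `[0, 1] -> phiP a p -> phiP (H (a, s)) p,
        forall a, A a -> H (a, 0) = f a
      & forall a, A a -> H (a, 1) = g a].

Definition filtered_homotopy_equivalence (d : Order.disp_t) (P : porderType d)
  (R : realType) (A B : set (realiz P R)) (f : realiz P R -> realiz P R)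
  : Prop :=
  filtered_map A B f /\
  exists g, [/\ filtered_map B A g,
                filtered_homotopic A A (g \o f) id
              & filtered_homotopic B B (f \o g) id].

(* Main.v *)
Require Import Defs.
From HB Require Import structures.
From mathcomp Require Import all_boot all_order all_algebra.
From mathcomp Require Import all_classical all_reals topology normedtype.
From mathcomp Require Import lra.

Import Order.TTheory GRing.Theory Num.Theory numFieldNormedType.Exports.
Local Open Scope classical_set_scope.
Local Open Scope ring_scope.
Set Implicit Arguments. Unset Strict Implicit. Unset Printing Implicit Defensive.

Definition sig_ (d : Order.disp_t) (P : porderType d) (R : realType)
  (s : seq P) (t : realiz P R) : R := \sum_(q <- undup s) t q.

Definition Hh (d : Order.disp_t) (P : porderType d) (R : realType)
  (s : seq P) (x : realiz P R * R) : realiz P R :=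
  fun p => (1 - x.2) * (if p \in s then x.1 p / sig_ s x.1 else 0) + x.2 * x.1 p.

Lemma big_swap_uniq (T : eqType) (R : realType) (r1 r2 : seq T) (F : T -> R) :
  uniq r1 -> uniq r2 -> (forall p, p \notin r1 -> F p = 0) ->
  (forall p, p \notin r2 -> F p = 0) ->
  \sum_(p <- r1) F p = \sum_(p <- r2) F p.
Proof.
move=> u1 u2 h1 h2.
have e1 : \sum_(p <- r1) F p = \sum_(p <- r1 | p \in r2) F p.
  have z : \sum_(p <- r1 | p \notin r2) F p = 0 by apply: big1 => p; exact: h2.
  by rewrite [LHS](bigID (fun p => p \in r2)) /= z addr0.
have e2 : \sum_(p <- r2) F p = \sum_(p <- r2 | p \in r1) F p.
  have z : \sum_(p <- r2 | p \notin r1) F p = 0 by apply: big1 => p; exact: h1.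
  by rewrite [LHS](bigID (fun p => p \in r1)) /= z addr0.
rewrite e1 e2 -[LHS]big_filter -[RHS]big_filter.
apply: perm_big.
apply: uniq_perm; rewrite ?filter_uniq // => x.
by rewrite !mem_filter andbC.
Qed.

Lemma sum_simplex (d : Order.disp_t) (P : porderType d) (R : realType)
  (c r : seq P) (t : realiz P R) :
  in_simplex c t -> (forall p, p \notin r -> t p = 0) ->
  \sum_(p <- undup r) t p = 1.
Proof.
move=> [t0 tc t1] hr; rewrite -t1; apply: big_swap_uniq; rewrite ?undup_uniq //.
  by move=> p; rewrite mem_undup; apply: hr.
by move=> p; rewrite mem_undup; apply: tc.
Qed.

Lemma Hh_zero (d : Order.disp_t) (P : porderType d) (R : realType)
  (s : seq P) (t : realiz P R) (u : R) (p : P) :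
  t p = 0 -> Hh s (t, u) p = 0.
Proof. by move=> tp; rewrite /Hh /= tp mul0r mulr0 addr0; case: ifP; rewrite ?mul0r ?mulr0. Qed.

Lemma Hh_ge0 (d : Order.disp_t) (P : porderType d) (R : realType)
  (s : seq P) (t : realiz P R) (u : R) (p : P) :
  (forall q, 0 <= t q) -> 0 < sig_ s t -> 0 <= u <= 1 -> 0 <= Hh s (t, u) p.
Proof.
move=> t0 s0 /andP[u0 u1]; rewrite /Hh /=; apply: addr_ge0; last exact: mulr_ge0.
apply: mulr_ge0; first by rewrite subr_ge0.
by case: ifP => // _; apply: divr_ge0 => //; apply: ltW.
Qed.

Lemma Hh_simplex (d : Order.disp_t) (P : porderType d) (R : realType)
  (s c : seq P) (t : realiz P R) (u : R) :
  in_simplex c t -> 0 < sig_ s t -> 0 <= u <= 1 -> in_simplex c (Hh s (t, u)).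
Proof.
move=> [t0 tc t1] s0 u01; split.
- by move=> p; apply: Hh_ge0.
- by move=> p /tc; apply: Hh_zero.
rewrite /Hh /= big_split /= -!mulr_sumr t1 mulr1.
suff -> : \sum_(i <- undup c) (if i \in s then t i / sig_ s t else 0) = 1.
  by rewrite mulr1 subrK.
rewrite (@big_swap_uniq _ _ _ (undup s)) ?undup_uniq //; last 2 first.
- by move=> p; rewrite mem_undup => /tc ->; case: ifP; rewrite ?mul0r.
- by move=> p; rewrite mem_undup => /negbTE ->.
rewrite (eq_big_seq (fun i => t i / sig_ s t)); last first.
  by move=> i; rewrite mem_undup => ->.
rewrite -mulr_suml divff //; exact: lt0r_neq0.
Qed.

Lemma Hh_simplex_s (d : Order.disp_t) (P : porderType d) (R : realType)
  (s : seq P) (t : realiz P R) :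
  (forall q, 0 <= t q) -> 0 < sig_ s t -> in_simplex s (Hh s (t, 0)).
Proof.
move=> t0 s0; split.
- by move=> p; apply: Hh_ge0; rewrite // lexx ler01.
- by move=> p /negbTE hp; rewrite /Hh /= hp !mul0r mulr0 addr0.
rewrite /Hh /= (eq_big_seq (fun i => t i / sig_ s t)); last first.
  by move=> i; rewrite mem_undup => ->; rewrite subr0 mul1r mul0r addr0.
rewrite -mulr_suml divff //; exact: lt0r_neq0.
Qed.
Definition sfil (d : Order.disp_t) (P : porderType d) (R : realType)
  (c : seq P) (t : realiz P R) : set_system (realiz P R) :=
  filter_from [set e : R | 0 < e]
    (fun e => [set t' | in_simplex c t' /\ forall p, p \in c -> `|t' p - t p| < e]).

Instance sfil_filter (d : Order.disp_t) (P : porderType d) (R : realType)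
  (c : seq P) (t : realiz P R) : Filter (sfil c t).
Proof.
apply: filter_from_filter; first by exists 1; rewrite /= ltr01.
move=> i j i0 j0; exists (Num.min i j); first by rewrite /= lt_min i0 j0.
move=> t' [st h]; split; split => // p pc; have := h p pc; rewrite lt_min => /andP[] //.
Qed.

Lemma sfil_in (d : Order.disp_t) (P : porderType d) (R : realType)
  (c : seq P) (t : realiz P R) (Q : set (realiz P R)) :
  in_simplex c t -> sfil c t Q -> Q t.
Proof. by move=> st [e /= e0]; apply; split => // p _; rewrite subrr normr0. Qed.

Lemma sfil_simplex (d : Order.disp_t) (P : porderType d) (R : realType)
  (c : seq P) (t : realiz P R) : sfil c t (in_simplex c).
Proof. by exists 1; rewrite /= ?ltr01 // => t' []. Qed.

Lemma sfil_coord (d : Order.disp_t) (P : porderType d) (R : realType)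
  (c : seq P) (t : realiz P R) (p : P) :
  in_simplex c t -> (fun t' : realiz P R => t' p) @ sfil c t --> t p.
Proof.
move=> [_ tc _]; apply/cvgrPdist_lt => e e0.
exists e => // t' [[_ t'c _] h]; case: (boolP (p \in c)) => pc.
  by rewrite distrC; apply: h.
by rewrite tc // t'c // subrr normr0.
Qed.

Lemma wopen_sfil (d : Order.disp_t) (P : porderType d) (R : realType)
  (W : set (realiz P R)) (c : seq P) (x : realiz P R) :
  Defs.wopen W -> is_chain c -> in_simplex c x -> W x -> sfil c x W.
Proof.
move=> oW cc sx Wx; have [e e0 H] := oW c cc x sx Wx.
by exists e => // t' [st' h]; apply: H.
Qed.

Lemma cvg_sum_seq (T : Type) (F : set_system T) (FF : Filter F) (R : realType)
  (I : Type) (r : seq I) (f : I -> T -> R) (l : I -> R) :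
  (forall i, f i @ F --> l i) ->
  (fun x => \sum_(i <- r) f i x) @ F --> \sum_(i <- r) l i.
Proof.
move=> h; elim: r => [|i r IH].
  rewrite big_nil; under eq_cvg do rewrite big_nil; exact: cvg_cst.
rewrite big_cons; under eq_cvg do rewrite big_cons.
exact: cvgD.
Qed.

Lemma Hh_cvg (d : Order.disp_t) (P : porderType d) (R : realType)
  (X : Type) (F : set_system X) (FF : Filter F) (s : seq P)
  (k : X -> realiz P R) (v : X -> R) (t : realiz P R) (u : R) (p : P) :
  (forall q, (fun x => k x q) @ F --> t q) -> v @ F --> u -> 0 < sig_ s t ->
  (fun x => Hh s (k x, v x) p) @ F --> Hh s (t, u) p.
Proof.
move=> hk hv s0.
have hs : (fun x => sig_ s (k x)) @ F --> sig_ s t.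
  rewrite /sig_; apply: (@cvg_sum_seq _ _ _ _ _ _ (fun q x => k x q)) => q; exact: hk.
rewrite /Hh /=; apply: cvgD; apply: cvgM => //.
- apply: cvgB => //; exact: cvg_cst.
- case: ifP => _; last exact: cvg_cst.
  apply: cvgM => //; apply: cvgV => //; exact: lt0r_neq0.
Qed.

Lemma filter_all_seq (T : Type) (F : set_system T) (FF : Filter F)
  (I : eqType) (r : seq I) (Q : I -> T -> Prop) :
  (forall i, i \in r -> F (Q i)) -> F (fun x => forall i, i \in r -> Q i x).
Proof.
elim: r => [|i r IH] h.
  by apply: filterS filterT => x _ j; rewrite in_nil.
have Fi : F (Q i) by apply: h; rewrite mem_head.
have Fr : F (fun x => forall j, j \in r -> Q j x).
  by apply: IH => j jr; apply: h; rewrite in_cons jr orbT.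
apply: filterS (filterI Fi Fr) => x [Qi Qr] j; rewrite in_cons => /orP[/eqP->|] //.
exact: Qr.
Qed.

Lemma evW (d : Order.disp_t) (P : porderType d) (R : realType)
  (h : realiz P R * R -> realiz P R) (D W : set (realiz P R)) (c : seq P)
  (t : realiz P R) (u : R) :
  Defs.wopen W -> is_chain c -> in_simplex c t -> sfil c t D ->
  (forall t' u', in_simplex c t' -> D t' -> 0 <= u' <= 1 ->
     in_simplex c (h (t', u'))) ->
  (forall p, (fun q : R * realiz P R => h (q.2, q.1) p)
     @ filter_prod (nbhs u) (sfil c t) --> h (t, u) p) ->
  0 <= u <= 1 -> D t -> W (h (t, u)) ->
  filter_prod (nbhs u) (sfil c t) (fun q => 0 <= q.1 <= 1 -> W (h (q.2, q.1))).
Proof.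
move=> oW cc st sD hs hc u01 Dt Wh.
have [e e0 He] := oW c cc (h (t, u)) (hs t u st Dt u01) Wh.
have E1 : filter_prod (nbhs u) (sfil c t)
    (fun q => forall p, p \in c -> `|h (t, u) p - h (q.2, q.1) p| < e).
  apply: filter_all_seq => p _.
  by move: (hc p) => /cvgrPdist_lt; apply.
have E2 : filter_prod (nbhs u) (sfil c t)
    (fun q => in_simplex c q.2 /\ D q.2).
  exists (setT, fun x => in_simplex c x /\ D x).
    by split; [exact: filterT | exact: filterI (sfil_simplex c t) sD].
  by move=> [a b] [_ /= ?].
apply: filterS (filterI E1 E2) => q [h1 [h2 h3]] q01.
apply: He; first exact: hs.
by move=> p pc; rewrite distrC; apply: h1.
Qed.

Lemma cont_H (d : Order.disp_t) (P : porderType d) (R : realType)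
  (B D : set (realiz P R)) (h : realiz P R * R -> realiz P R) :
  B `<=` @realization d P R -> B `<=` D ->
  (forall c t, is_chain c -> in_simplex c t -> D t -> sfil c t D) ->
  (forall c t u, is_chain c -> in_simplex c t -> D t -> 0 <= u <= 1 ->
     in_simplex c (h (t, u))) ->
  (forall c t u p, is_chain c -> in_simplex c t -> D t ->
     (fun q : R * realiz P R => h (q.2, q.1) p)
       @ filter_prod (nbhs u) (sfil c t) --> h (t, u) p) ->
  {within B `*` `[0, 1], continuous h}.
Proof.
move=> Breal BD hD hs hc.
apply/subspace_continuousP => -[t0 u0] [/= Bt0].
rewrite in_itv /= => u01.
move=> V /= nV.
rewrite /from_subspace in nV *.
move: nV; rewrite nbhsE => -[W [oW Wh] WV].
have oW' : Defs.wopen W := oW.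
have [c0 [cc0 sc0]] := Breal t0 Bt0.
have E0 := evW oW' cc0 sc0 (hD c0 t0 cc0 sc0 (BD t0 Bt0))
  (fun t' u' st' Dt' u01' => hs c0 t' u' cc0 st' Dt' u01')
  (fun p => hc c0 t0 u0 p cc0 sc0 (BD t0 Bt0)) u01 (BD t0 Bt0) Wh.
case: E0 => -[P1 Q1] /= [nP1 sQ1] PQ.
have [del del0 Hdel] := nP1.
set a := Num.max 0 (u0 - del / 2); set b := Num.min 1 (u0 + del / 2).
have del2 : 0 < del / 2 by rewrite divr_gt0.
have Kin : forall u, a <= u <= b -> 0 <= u <= 1 /\ ball u0 del u.
  move=> u /andP[]; rewrite /a /b ge_max le_min => /andP[u0' u1'] /andP[u2 u3].
  split; first by rewrite u0' u2.
  rewrite -ball_normE /ball_ /= ltr_norml; apply/andP; split; lra.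
pose U := [set t | D t /\ forall u, a <= u <= b -> W (h (t, u))].
have oU : open U.
  change (Defs.wopen U) => c cc t st [Dt HU].
  have NC := @segment_compact R a b.
  move/compact_near_coveringP/near_covering_withinP : NC => NC.
  have : sfil c t (fun i => `[a, b] `<=` (fun x => W (h (i, x)))).
    apply: (NC _ (sfil c t) (fun i x => W (h (i, x)))) => u; rewrite /= in_itv /= => Ku.
    have [Iu _] := Kin u Ku.
    have := evW oW' cc st (hD c t cc st Dt)
      (fun t' u' st' Dt' u01' => hs c t' u' cc st' Dt' u01')
      (fun p => hc c t u p cc st Dt) Iu Dt (HU u Ku).
    apply: filterS => -[x' i] /= H; rewrite in_itv /= => Kx'.
    by apply: H; case: (Kin x' Kx').
  move=> H1; have := filterI H1 (hD c t cc st Dt).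
  move=> [e /= e0 He]; exists e => // t' st' ht'.
  have [H2 H3] := He t' (conj st' ht').
  split; first exact: H3.
  move=> u Ku; apply: H2; by rewrite /= in_itv /=.
have Ut0 : U t0.
  split; first exact: BD.
  move=> u Ku; have [Iu bu] := Kin u Ku.
  by apply: (PQ (u, t0)) => //; split; [exact: Hdel | exact: (sfil_in sc0 sQ1)].
have nU : nbhs (t0, u0) (U `*` ball u0 (del / 2)).
  exists (U, ball u0 (del / 2)) => //; split => /=.
    by apply: open_nbhs_nbhs; split.
  exact: nbhsx_ballx.
apply: filterS nU => -[t u] [/= Ut bu] [/= Bt].
rewrite in_itv /= => Iu; apply: WV; apply: Ut.2.
move: bu Iu; rewrite -ball_normE /ball_ /= ltr_norml /a /b ge_max le_min => /andP[h1 h2] /andP[h3 h4].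
apply/andP; split; apply/andP; split => //; lra.
Qed.

Lemma cont_1 (d : Order.disp_t) (P : porderType d) (R : realType)
  (B D : set (realiz P R)) (g : realiz P R -> realiz P R) :
  B `<=` @realization d P R -> B `<=` D ->
  (forall c t, is_chain c -> in_simplex c t -> D t -> sfil c t D) ->
  (forall c t, is_chain c -> in_simplex c t -> D t -> in_simplex c (g t)) ->
  (forall c t p, is_chain c -> in_simplex c t -> D t ->
     (fun t' => g t' p) @ sfil c t --> g t p) ->
  {within B, continuous g}.
Proof.
move=> Breal BD hD hs hc.
apply/subspace_continuousP => t0 Bt0 V /= nV.
rewrite /from_subspace in nV *.
move: nV; rewrite nbhsE => -[W [oW Wh] WV].
have oW' : Defs.wopen W := oW.
pose U := [set t | D t /\ W (g t)].
have oU : open U.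
  change (Defs.wopen U) => c cc t st [Dt Wt].
  have [e e0 He] := oW' c cc (g t) (hs c t cc st Dt) Wt.
  have E1 : sfil c t (fun t' => forall p, p \in c -> `|g t p - g t' p| < e).
    apply: filter_all_seq => p _.
    by move: (hc c t p cc st Dt) => /cvgrPdist_lt; apply.
  have := filterI E1 (filterI (sfil_simplex c t) (hD c t cc st Dt)).
  move=> [e' /= e0' He']; exists e' => // t' st' ht'.
  have [H1 [H2 H3]] := He' t' (conj st' ht').
  split => //; apply: He; first exact: hs.
  by move=> p pc; rewrite distrC; apply: H1.
have nU : nbhs t0 U by apply: open_nbhs_nbhs; split => //; split; [exact: BD|].
apply: filterS nU => t [_ Wt] _; exact: WV.
Qed.

Lemma chain_cons (d : Order.disp_t) (P : porderType d) (x : P) (r : seq P) :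
  is_chain (x :: r) -> is_chain r.
Proof. by move=> h p q pr qr; apply: h; rewrite in_cons ?pr ?qr orbT. Qed.

Lemma exists_max (d : Order.disp_t) (P : porderType d) (r : seq P) (f : pred P) :
  is_chain r -> has f r ->
  exists2 p, p \in r & f p /\ forall q, q \in r -> f q -> (q <= p)%O.
Proof.
elim: r => [|x r IH] //= cr.
case: (boolP (has f r)) => hr hx.
  have [p pr [fp hp]] := IH (chain_cons cr) hr.
  have : (x >=< p)%O by apply: cr; rewrite in_cons ?eqxx ?pr ?orbT.
  case: (boolP (f x)) => fx.
    move=> /orP[xp|px].
      exists p; first by rewrite in_cons pr orbT.
      split => // q; rewrite in_cons => /orP[/eqP->|qr] // fq; exact: hp.
    exists x; first by rewrite mem_head.
    split => // q; rewrite in_cons => /orP[/eqP->|qr] // fq.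
    exact: le_trans (hp q qr fq) px.
  move=> _; exists p; first by rewrite in_cons pr orbT.
  split => // q; rewrite in_cons => /orP[/eqP->|qr] fq; last exact: hp.
  by rewrite fq in fx.
have fx : f x by move: hx; rewrite ?orbF.
exists x; first by rewrite mem_head.
split => // q; rewrite in_cons => /orP[/eqP->|qr] // fq.
by move/hasPn: hr => /(_ q qr); rewrite fq.
Qed.

Lemma sorted_chain (d : Order.disp_t) (P : porderType d) (s : seq P) :
  sorted (fun p q => (p < q)%O) s -> is_chain s.
Proof.
elim: s => [|x r IH] /=; first by move=> p q.
move=> pr; have sr : sorted (fun p q => (p < q)%O) r by apply: path_sorted pr.
have ax : all (fun q => (x < q)%O) r.
  by apply: order_path_min => //; exact: lt_trans.
move=> p q; rewrite !in_cons => /orP[/eqP->|pr'] /orP[/eqP->|qr'].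
- exact: comparablexx.
- by apply: lt_comparable; move/allP: ax; apply.
- by rewrite comparable_sym; apply: lt_comparable; move/allP: ax; apply.
- exact: IH.
Qed.

Lemma sig_gt0 (d : Order.disp_t) (P : porderType d) (R : realType)
  (s : seq P) (t : realiz P R) (p : P) :
  (forall q, 0 <= t q) -> p \in s -> t p != 0 -> 0 < sig_ s t.
Proof.
move=> t0 ps tp; rewrite /sig_ (bigD1_seq p) ?mem_undup ?undup_uniq //=.
have tp0 : 0 < t p by rewrite lt_def tp t0.
apply: (lt_le_trans tp0); rewrite lerDl; apply: sumr_ge0 => q _; exact: t0.
Qed.

Lemma phiP_uniq (d : Order.disp_t) (P : porderType d) (R : realType)
  (t : realiz P R) (p q : P) : phiP t p -> phiP t q -> p = q.
Proof.
move=> [tp hp] [tq hq]; apply/le_anti; rewrite hq //=; exact: hp.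
Qed.

Lemma real_ge0 (d : Order.disp_t) (P : porderType d) (R : realType)
  (t : realiz P R) : realization t -> forall q, 0 <= t q.
Proof. by move=> [c [_ [h _ _]]]. Qed.

Lemma Hh_phiP (d : Order.disp_t) (P : porderType d) (R : realType)
  (s : seq P) (t : realiz P R) (u : R) (p : P) :
  (forall q, 0 <= t q) -> 0 < sig_ s t -> 0 <= u <= 1 -> p \in s ->
  phiP t p -> phiP (Hh s (t, u)) p.
Proof.
move=> t0 s0 /andP[u0 u1] ps [tp hp]; split.
  have tp0 : 0 < t p by rewrite lt_def tp t0.
  rewrite /Hh /= ps; apply: lt0r_neq0.
  have a0 : 0 < t p / sig_ s t by rewrite divr_gt0.
  case: (ltrP 0 u) => hu.
    apply: ltr_wpDl; last by rewrite mulr_gt0.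
    by apply: mulr_ge0; [rewrite subr_ge0 | exact: ltW].
  have -> : u = 0 by apply/le_anti; rewrite hu u0.
  by rewrite subr0 mul1r mul0r addr0.
move=> q hq; apply: hp; apply: contra hq => /eqP tq.
by rewrite Hh_zero.
Qed.

Lemma sfil_D (d : Order.disp_t) (P : porderType d) (R : realType)
  (s c : seq P) (t : realiz P R) :
  in_simplex c t -> 0 < sig_ s t -> sfil c t (fun t' => 0 < sig_ s t').
Proof.
move=> st s0.
have hs : (fun t' => sig_ s t') @ sfil c t --> sig_ s t.
  rewrite /sig_; apply: (@cvg_sum_seq _ _ _ _ _ _ (fun q t' => t' q)) => q.
  exact: sfil_coord.
move/cvgrPdist_lt : hs => /(_ _ s0).
apply: filterS => t'; rewrite ltr_norml => /andP[_ h]; lra.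
Qed.

Lemma Hh_hc (d : Order.disp_t) (P : porderType d) (R : realType) (s : seq P)
  (c : seq P) (t : realiz P R) (u : R) (p : P) :
  is_chain c -> in_simplex c t -> 0 < sig_ s t ->
  (fun q : R * realiz P R => Hh s (q.2, q.1) p)
    @ filter_prod (nbhs u) (sfil c t) --> Hh s (t, u) p.
Proof.
move=> _ st s0.
apply: (@Hh_cvg _ _ _ _ _ _ s (fun q => q.2) (fun q => q.1)) => //.
  move=> q; apply: (cvg_comp (fun x : R * realiz P R => x.2) (fun t' : realiz P R => t' q)).
    exact: cvg_snd.
  exact: sfil_coord.
exact: cvg_fst.
Qed.

Theorem lemma2p17 (d : Order.disp_t) (P : porderType d) (R : realType)
  (s : seq P) :
  s != [::] -> sorted (fun p q => (p < q)%O) s ->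
  filtered_homotopy_equivalence (@simplex_real d P R s) (@phi_preim d P R s) id.
Proof.
move=> sn0 ssort.
have cs := sorted_chain ssort.
pose D := fun t : realiz P R => 0 < sig_ s t.
have hD : forall c t, is_chain c -> in_simplex c t -> D t -> sfil c t D.
  by move=> c t _ st Dt; apply: sfil_D.
have hs : forall c t u, is_chain c -> in_simplex c t -> D t -> 0 <= u <= 1 ->
    in_simplex c (Hh s (t, u)).
  by move=> c t u _ st Dt u01; apply: Hh_simplex.
have hc := fun c t u p cc st (Dt : D t) => @Hh_hc d P R s c t u p cc st Dt.
have Areal : @simplex_real d P R s `<=` @realization d P R.
  by move=> t st; exists s.
have AD : @simplex_real d P R s `<=` D.
  move=> t st; rewrite /D /sig_; case: st => _ _ ->; exact: ltr01.
have Bfacts : forall t, @phi_preim d P R s t ->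
    [/\ forall q, 0 <= t q, D t & forall p, phiP t p -> p \in s].
  move=> t [rt [p ps php]]; split.
  - exact: real_ge0.
  - by apply: (sig_gt0 (real_ge0 rt) ps); case: php.
  - by move=> q phq; rewrite -(phiP_uniq php phq).
have AB : forall t, @simplex_real d P R s t -> @phi_preim d P R s t.
  move=> t st; split; first by exists s.
  have [t0 tc t1] : in_simplex s t := st.
  have hf : has (fun q => t q != 0) s.
    apply/negPn/negP => /hasPn hn.
    have z : \sum_(q <- undup s) t q = 0.
      by apply: big1_seq => q /andP[_]; rewrite mem_undup => /hn; rewrite negbK => /eqP.
    by move: t1; rewrite z => /eqP; rewrite eq_sym oner_eq0.
  have [p ps [tp hp]] := exists_max cs hf.
  exists p => //; split => // q tq; apply: hp => //.
  by apply: contraR tq => /tc ->.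
pose g := fun t : realiz P R => Hh s (t, 0).
split.
  split.
  - by apply: continuous_subspaceT => x; exact: cvg_id.
  - exact: AB.
  - by [].
exists g; split.
- split.
  + apply: (@cont_1 _ _ _ _ D).
    * by move=> t [].
    * by move=> t /Bfacts[].
    * exact: hD.
    * move=> c t cc st Dt; apply: hs => //; apply/andP; split => //; exact: ler01.
    * move=> c t p cc st Dt.
      apply: (@Hh_cvg _ _ _ _ _ _ s id (fun _ => 0)) => //.
        by move=> q; exact: sfil_coord.
      exact: cvg_cst.
  + move=> t /Bfacts[t0 Dt _]; exact: Hh_simplex_s.
  + move=> t p /Bfacts[t0 Dt hp] php; apply: (Hh_phiP t0 Dt _ (hp p php) php).
    apply/andP; split => //; exact: ler01.
- exists (Hh s); split.
  + apply: (@cont_H _ _ _ _ D); [exact: Areal | exact: AD | exact: hD | exact: hs | exact: hc].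
  + move=> a u sa; rewrite in_itv /= => u01; exact: (hs s a u cs sa (AD a sa) u01).
  + move=> a u p sa; rewrite in_itv /= => u01 php.
    have [t0 Dt hp] := Bfacts a (AB a sa).
    exact: (Hh_phiP t0 Dt u01 (hp p php) php).
  + by [].
  + move=> a _; apply/funext => p; rewrite /Hh /= subrr mul0r add0r mul1r //.
- exists (Hh s); split.
  + apply: (@cont_H _ _ _ _ D); [by move=> t [] | by move=> t /Bfacts[] | exact: hD | exact: hs | exact: hc].
  + move=> a u Ba; rewrite in_itv /= => u01.
    have [t0 Dt hp] := Bfacts a Ba.
    case: Ba => -[c [cc sc]] [p ps php]; split.
      by exists c; split => //; exact: hs.
    by exists p => //; apply: (Hh_phiP t0 Dt u01 ps php).
  + move=> a u p Ba; rewrite in_itv /= => u01 php.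
    have [t0 Dt hp] := Bfacts a Ba.
    exact: (Hh_phiP t0 Dt u01 (hp p php) php).
  + by [].
  + move=> a _; apply/funext => p; rewrite /Hh /= subrr mul0r add0r mul1r //.
Qed.
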